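(* Let $0<r_1<r_2<r_3$ satisfy \[ r_2(r_3-r_1)^3 - r_1(r_3+r_2)^3 - r_3(r_1+r_2)^3 \ \ge\ 0 . \] Then the only stationary points (zeros of the gradient) of the smooth function $f:\mathbb T^2\to\mathbb R$, \[ f(\alpha,\beta)=F_{12}(\alpha)+F_{13}(\beta)+F_{23}(\alpha-\beta),\] are $(0,0)$, $(0,\pi)$, $(\pi,0)$ and $(\pi,\pi)$.
   Context: For $i,j\in\{1,2,3\}$ and $\theta\in\mathbb R/2\pi\mathbb Z$ set $D_{ij}(\theta)=r_i^2+r_j^2-2r_ir_j\cos\theta$ and $F_{ij}(\theta)=D_{ij}(\theta)^{-1/2}$ (smooth since $r_i\neq r_j$). *)

(* Defs.v *)
From Stdlib Require Import Reals.
From Coquelicot Require Import Coquelicot.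
Open Scope R_scope.

Definition Dij (ri rj theta : R) : R := ri ^ 2 + rj ^ 2 - 2 * ri * rj * cos theta.

Definition Fij (ri rj theta : R) : R := / sqrt (Dij ri rj theta).

(* f(alpha,beta) = F12(alpha) + F13(beta) + F23(alpha - beta),
   viewed as a 2pi-periodic function on R^2 (i.e. a function on the torus). *)
Definition f_pot (r1 r2 r3 alpha beta : R) : R :=
  Fij r1 r2 alpha + Fij r1 r3 beta + Fij r2 r3 (alpha - beta).

Definition stationary (r1 r2 r3 alpha beta : R) : Prop :=
  is_derive (fun a => f_pot r1 r2 r3 a beta) alpha 0 /\
  is_derive (fun b => f_pot r1 r2 r3 alpha b) beta 0.

Definition zero_or_pi_mod2pi (x : R) : Prop :=
  exists k : Z, x = 2 * IZR k * PI \/ x = PI + 2 * IZR k * PI.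

(* Main.v *)
Require Import Defs.
From Stdlib Require Import Reals Lra Psatz.
From Coquelicot Require Import Coquelicot.
Open Scope R_scope.

Lemma D_ge (ri rj t : R) : 0 < ri -> ri < rj -> (rj - ri)^2 <= Dij ri rj t.
Proof. intros. unfold Dij. pose proof (COS_bound t).
  assert (0 <= ri*rj*(1 - cos t)) by (apply Rmult_le_pos; nra). nra. Qed.
Lemma D_pos (ri rj t : R) : 0 < ri -> ri < rj -> 0 < Dij ri rj t.
Proof. intros. pose proof (D_ge ri rj t H H0). nra. Qed.

Definition dF ri rj t := - (ri * rj * sin t) / (Dij ri rj t * sqrt (Dij ri rj t)).

Lemma F_derive (ri rj t : R) : 0 < ri -> ri < rj -> is_derive (Fij ri rj) t (dF ri rj t).
Proof.
  intros H1 H2. pose proof (D_pos ri rj t H1 H2) as HD.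
  pose proof (sqrt_lt_R0 _ HD) as HS.
  unfold Fij, dF. unfold Dij in *.
  auto_derive.
  - replace (ri * (ri * 1) + rj * (rj * 1) + - (2 * ri * rj * cos t)) with (ri ^ 2 + rj ^ 2 - 2 * ri * rj * cos t) by ring.
    repeat split; lra.
  - replace (ri * (ri * 1) + rj * (rj * 1) + - (2 * ri * rj * cos t)) with (ri ^ 2 + rj ^ 2 - 2 * ri * rj * cos t) by ring.
    set (D := ri ^ 2 + rj ^ 2 - 2 * ri * rj * cos t) in *.
    set (S := sqrt D) in *.
    assert (E : D = S * S) by (unfold S; rewrite sqrt_sqrt; lra).
    rewrite E. field. lra.
Qed.

Lemma dalpha r1 r2 r3 a b : 0 < r1 -> r1 < r2 -> r2 < r3 ->
  is_derive (fun x => f_pot r1 r2 r3 x b) a (dF r1 r2 a + dF r2 r3 (a - b)).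
Proof.
  intros. unfold f_pot.
  apply (is_derive_ext (fun x => plus (plus (Fij r1 r2 x) (Fij r1 r3 b)) (Fij r2 r3 (x - b)))).
  { intros; reflexivity. }
  replace (dF r1 r2 a + dF r2 r3 (a - b)) with (plus (plus (dF r1 r2 a) zero) (scal (minus one zero) (dF r2 r3 (a - b)))).
  2:{ unfold plus, zero, scal, one, minus, opp, mult; simpl. unfold plus, zero, one, opp, mult; simpl. ring. }
  apply (@is_derive_plus R_AbsRing R_NormedModule). apply (@is_derive_plus R_AbsRing R_NormedModule). apply F_derive; lra. apply (@is_derive_const R_AbsRing R_NormedModule).
  apply (@is_derive_comp R_AbsRing R_NormedModule (Fij r2 r3) (fun x => minus x b)). apply F_derive; lra.
  apply (@is_derive_minus R_AbsRing R_NormedModule). apply is_derive_id. apply (@is_derive_const R_AbsRing R_NormedModule).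
Qed.

Lemma dbeta r1 r2 r3 a b : 0 < r1 -> r1 < r2 -> r2 < r3 ->
  is_derive (fun y => f_pot r1 r2 r3 a y) b (dF r1 r3 b - dF r2 r3 (a - b)).
Proof.
  intros. unfold f_pot.
  apply (is_derive_ext (fun y => plus (plus (Fij r1 r2 a) (Fij r1 r3 y)) (Fij r2 r3 (a - y)))).
  { intros; reflexivity. }
  replace (dF r1 r3 b - dF r2 r3 (a - b)) with (plus (plus zero (dF r1 r3 b)) (scal (minus zero one) (dF r2 r3 (a - b)))).
  2:{ unfold plus, zero, scal, one, minus, opp, mult; simpl. unfold plus, zero, one, opp, mult; simpl. ring. }
  apply (@is_derive_plus R_AbsRing R_NormedModule). apply (@is_derive_plus R_AbsRing R_NormedModule).
  apply (@is_derive_const R_AbsRing R_NormedModule). apply F_derive; lra.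
  apply (@is_derive_comp R_AbsRing R_NormedModule (Fij r2 r3) (fun y => minus a y)). apply F_derive; lra.
  apply (@is_derive_minus R_AbsRing R_NormedModule). apply (@is_derive_const R_AbsRing R_NormedModule). apply is_derive_id.
Qed.

Definition P ri rj t := Dij ri rj t * sqrt (Dij ri rj t).

Lemma P_pos ri rj t : 0 < ri -> ri < rj -> 0 < P ri rj t.
Proof. intros. unfold P. pose proof (D_pos ri rj t H H0). pose proof (sqrt_lt_R0 _ H1). nra. Qed.

Lemma P_ge ri rj t : 0 < ri -> ri < rj -> (rj - ri)^3 <= P ri rj t.
Proof.
  intros. unfold P. pose proof (D_ge ri rj t H H0).
  assert (rj - ri <= sqrt (Dij ri rj t)).
  { rewrite <- (sqrt_pow2 (rj - ri)) by lra. apply sqrt_le_1_alt; lra. }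
  assert (0 <= rj - ri) by lra.
  replace ((rj-ri)^3) with ((rj-ri)^2 * (rj - ri)) by ring.
  apply Rmult_le_compat; nra.
Qed.

Lemma D_le ri rj t : 0 < ri -> ri < rj -> Dij ri rj t <= (ri + rj)^2.
Proof. intros. unfold Dij. pose proof (COS_bound t).
  assert (0 <= ri*rj*(1 + cos t)) by (apply Rmult_le_pos; nra). nra. Qed.

Lemma P_le ri rj t : 0 < ri -> ri < rj -> P ri rj t <= (ri + rj)^3.
Proof.
  intros. unfold P. pose proof (D_le ri rj t H H0). pose proof (D_pos ri rj t H H0).
  assert (sqrt (Dij ri rj t) <= ri + rj).
  { rewrite <- (sqrt_pow2 (ri + rj)) by lra. apply sqrt_le_1_alt; lra. }
  pose proof (sqrt_lt_R0 _ H2).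
  replace ((ri+rj)^3) with ((ri+rj)^2 * (ri + rj)) by ring.
  apply Rmult_le_compat; nra.
Qed.

Lemma P_lt ri rj t : 0 < ri -> ri < rj -> sin t <> 0 -> P ri rj t < (ri + rj)^3.
Proof.
  intros. unfold P. pose proof (D_pos ri rj t H H0).
  assert (cos t <> -1).
  { intro E. apply H1. pose proof (sin2_cos2 t). rewrite E in H3. unfold Rsqr in H3.
    nra. }
  pose proof (COS_bound t).
  assert (Dij ri rj t < (ri + rj)^2).
  { unfold Dij. assert (0 < ri*rj*(1 + cos t)) by (apply Rmult_lt_0_compat; [nra|]; lra). nra. }
  assert (sqrt (Dij ri rj t) < ri + rj).
  { rewrite <- (sqrt_pow2 (ri + rj)) by lra. apply sqrt_lt_1_alt; lra. }
  pose proof (sqrt_lt_R0 _ H2).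
  replace ((ri+rj)^3) with ((ri+rj)^2 * (ri + rj)) by ring.
  apply Rmult_le_0_lt_compat; lra.
Qed.

Lemma sin_tri a b : Rabs (sin b) <= Rabs (sin a) + Rabs (sin (a - b)).
Proof.
  replace b with (a - (a - b)) at 1 by ring. rewrite sin_minus.
  unfold Rminus at 1. eapply Rle_trans. apply Rabs_triang.
  rewrite Rabs_Ropp, !Rabs_mult.
  pose proof (COS_bound (a - b)). pose proof (COS_bound a).
  assert (Rabs (cos (a - b)) <= 1) by (apply Rabs_le; lra).
  assert (Rabs (cos a) <= 1) by (apply Rabs_le; lra).
  pose proof (Rabs_pos (sin a)). pose proof (Rabs_pos (sin (a-b))). nra.
Qed.

Lemma dF_eq ri rj t : 0 < ri -> ri < rj -> dF ri rj t = - (ri * rj * sin t) / P ri rj t.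
Proof. reflexivity. Qed.

Lemma key r1 r2 r3 a b : 0 < r1 -> r1 < r2 -> r2 < r3 ->
  r2 * (r3 - r1) ^ 3 - r1 * (r3 + r2) ^ 3 - r3 * (r1 + r2) ^ 3 >= 0 ->
  dF r1 r2 a + dF r2 r3 (a - b) = 0 -> dF r1 r3 b - dF r2 r3 (a - b) = 0 ->
  sin a = 0 /\ sin b = 0.
Proof.
  intros H1 H2 H3 Hc E1 E2. unfold dF in E1, E2. fold (P r1 r2 a) (P r2 r3 (a-b)) (P r1 r3 b) in E1, E2.
  pose proof (P_pos r1 r2 a H1 H2). pose proof (P_pos r2 r3 (a-b) ltac:(lra) H3).
  pose proof (P_pos r1 r3 b H1 ltac:(lra)).
  set (P12 := P r1 r2 a) in *. set (P23 := P r2 r3 (a-b)) in *. set (P13 := P r1 r3 b) in *.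
  set (x := sin a) in *. set (y := sin b) in *. set (z := sin (a - b)) in *.
  assert (Ex : x * r1 * P23 = - r3 * z * P12).
  { assert (E : r2 * (x * r1 * P23 + r3 * z * P12) = 0).
    { replace (r2 * (x * r1 * P23 + r3 * z * P12)) with (- ((- (r1 * r2 * x) / P12 + - (r2 * r3 * z) / P23) * (P12 * P23))) by (field; lra).
      rewrite E1. ring. }
    apply Rmult_integral in E. destruct E; lra. }
  assert (Ey : y * r1 * P23 = r2 * z * P13).
  { assert (E : r3 * (y * r1 * P23 - r2 * z * P13) = 0).
    { replace (r3 * (y * r1 * P23 - r2 * z * P13)) with (- ((- (r1 * r3 * y) / P13 - - (r2 * r3 * z) / P23) * (P13 * P23))) by (field; lra).
      rewrite E2. ring. }
    apply Rmult_integral in E. destruct E; lra. }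
  destruct (Req_dec z 0) as [Hz|Hz].
  - rewrite Hz in Ex, Ey. assert (0 < r1 * P23) by nra. split.
    + assert (Hx: x*(r1*P23)=0) by (rewrite <- Rmult_assoc, Ex; ring). apply Rmult_integral in Hx; destruct Hx; [auto|lra].
    + assert (Hx: y*(r1*P23)=0) by (rewrite <- Rmult_assoc, Ey; ring). apply Rmult_integral in Hx; destruct Hx; [auto|lra].
  - exfalso.
    assert (Hx : x <> 0). { intro Hx0. rewrite Hx0 in Ex. assert (E : (r3 * P12) * z = 0) by (rewrite Rmult_0_l in Ex; rewrite Rmult_0_l in Ex; nra). apply Rmult_integral in E. destruct E; nra. }
    pose proof (P_lt r1 r2 a H1 H2 Hx) as K4. fold P12 in K4.
    pose proof (P_ge r1 r3 b H1 ltac:(lra)) as K5. fold P13 in K5.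
    pose proof (P_le r2 r3 (a-b) ltac:(lra) H3) as K6. fold P23 in K6.
    pose proof (sin_tri a b) as K7. fold x y z in K7.
    assert (Ax : Rabs x * (r1 * P23) = r3 * Rabs z * P12).
    { rewrite <- (Rabs_pos_eq (r1 * P23)) by nra. rewrite <- Rabs_mult.
      rewrite <- (Rabs_pos_eq r3) by lra. rewrite <- (Rabs_pos_eq P12) by lra.
      rewrite <- !Rabs_mult. rewrite <- Rabs_Ropp. f_equal. lra. }
    assert (Ay : Rabs y * (r1 * P23) = r2 * Rabs z * P13).
    { rewrite <- (Rabs_pos_eq (r1 * P23)) by nra. rewrite <- Rabs_mult.
      rewrite <- (Rabs_pos_eq r2) by lra. rewrite <- (Rabs_pos_eq P13) by lra.
      rewrite <- !Rabs_mult. f_equal. lra. }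
    assert (Hzp : 0 < Rabs z) by (apply Rabs_pos_lt; exact Hz).
    assert (r2 * P13 <= r3 * P12 + r1 * P23).
    { apply (Rmult_le_reg_l (Rabs z)); [exact Hzp|].
      assert (0 < r1 * P23) by nra.
      assert (Rabs y * (r1 * P23) <= (Rabs x + Rabs z) * (r1 * P23)) by (apply Rmult_le_compat_r; lra).
      nra. }
    nra.
Qed.

Lemma zp_sin x : zero_or_pi_mod2pi x -> sin x = 0.
Proof.
  intros [k [E|E]]; apply sin_eq_0_1.
  - exists (2 * k)%Z. rewrite E, mult_IZR. simpl. ring.
  - exists (2 * k + 1)%Z. rewrite E, plus_IZR, mult_IZR. simpl. ring.
Qed.

Lemma sin_zp x : sin x = 0 -> zero_or_pi_mod2pi x.
Proof.
  intros H. destruct (sin_eq_0_0 x H) as [k Hk].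
  destruct (Z.Even_or_Odd k) as [[m Hm]|[m Hm]]; exists m; subst k.
  - left. rewrite Hk, mult_IZR. simpl. ring.
  - right. rewrite Hk, plus_IZR, mult_IZR. simpl. ring.
Qed.

Theorem proposition2p2 (r1 r2 r3 : R) :
  0 < r1 -> r1 < r2 -> r2 < r3 ->
  r2 * (r3 - r1) ^ 3 - r1 * (r3 + r2) ^ 3 - r3 * (r1 + r2) ^ 3 >= 0 ->
  forall alpha beta : R,
    stationary r1 r2 r3 alpha beta <->
    (zero_or_pi_mod2pi alpha /\ zero_or_pi_mod2pi beta).
Proof.
  intros H1 H2 H3 Hc a b. split.
  - intros [Da Db].
    pose proof (is_derive_unique _ _ _ Da) as U1.
    pose proof (is_derive_unique _ _ _ Db) as U2.
    rewrite (is_derive_unique _ _ _ (dalpha r1 r2 r3 a b H1 H2 H3)) in U1.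
    rewrite (is_derive_unique _ _ _ (dbeta r1 r2 r3 a b H1 H2 H3)) in U2.
    destruct (key r1 r2 r3 a b H1 H2 H3 Hc U1 U2). split; apply sin_zp; auto.
  - intros [Za Zb]. apply zp_sin in Za. apply zp_sin in Zb.
    assert (Zab : sin (a - b) = 0) by (rewrite sin_minus, Za, Zb; ring).
    split.
    + replace 0 with (dF r1 r2 a + dF r2 r3 (a - b)) at 1.
      apply dalpha; auto. unfold dF. rewrite Za, Zab. unfold Rdiv. ring.
    + replace 0 with (dF r1 r3 b - dF r2 r3 (a - b)) at 1.
      apply dbeta; auto. unfold dF. rewrite Zb, Zab. unfold Rdiv. ring.
Qed.
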